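(* Let $A=[a_{ij}]\in\{0,1\}^{N\times N}$ be the adjacency matrix of a static contact graph on nodes $\{1,\dots,N\}$ (with $a_{ii}=0$), and let $\beta_0>0$, $\delta>0$, $\kappa>0$ and $0\le\beta_a<\beta_0$. Let $(p_i(t),q_i(t))_{i=1}^N$ solve the SAIS system \[ \dot p_i=\beta_0(1-p_i-q_i)\sum_{j=1}^N a_{ij}p_j+\beta_a q_i\sum_{j=1}^N a_{ij}p_j-\delta p_i,\qquad \dot q_i=\kappa(1-p_i-q_i)\sum_{j=1}^N a_{ij}p_j-\beta_a q_i\sum_{j=1}^N a_{ij}p_j, \] for $i\in\{1,\dots,N\}$, with initial data at time $t_0$ that are probabilities ($p_i(t_0),q_i(t_0)\ge 0$, $p_i(t_0)+q_i(t_0)\le 1$), and let $(p_i'(t))_{i=1}^N$ solve the SIS (N-intertwined) system \[ \dot p_i'=\beta_0(1-p_i')\sum_{j=1}^N a_{ij}p_j'-\delta p_i',\qquad i\in\{1,\dots,N\}, \] with the same initial conditions $p_i'(t_0)=p_i(t_0)$ for all $i$. Then $p_i(t)\le p_i'(t)$ for all $i\in\{1,\dots,N\}$ and all $t\in[t_0,\infty)$.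
   Context: $p_i$ and $q_i$ are the (mean-field) probabilities that individual $i$ is infected and alert, respectively; $1-p_i-q_i$ is the probability it is susceptible. $a_{ij}=1$ if individual $j$ is a neighbor of individual $i$ (i.e. $i$ can be directly infected by $j$), and $a_{ij}=0$ otherwise. $\beta_0$ is the infection rate of a susceptible individual, $\beta_a$ the infection rate of an alert individual, $\kappa$ the alerting rate, $\delta$ the curing rate. *)

(* Defs.v *)
From HB Require Import structures.
From mathcomp Require Import all_boot all_order all_algebra.
From mathcomp Require Import all_classical all_reals all_analysis.
Set Implicit Arguments. Unset Strict Implicit. Unset Printing Implicit Defensive.
Import Order.TTheory GRing.Theory Num.Theory.
Import numFieldNormedType.Exports.
Local Open Scope ring_scope.

Definition pressure (R : realType) (N : nat) (A : 'M[R]_N)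
  (p : 'I_N -> R -> R) (i : 'I_N) (t : R) : R :=
  \sum_(j < N) A i j * p j t.

Definition sais_p_rhs (R : realType) (N : nat) (A : 'M[R]_N)
  (beta0 betaa delta : R) (p q : 'I_N -> R -> R) (i : 'I_N) (t : R) : R :=
  beta0 * (1 - p i t - q i t) * pressure A p i t
  + betaa * q i t * pressure A p i t - delta * p i t.

Definition sais_q_rhs (R : realType) (N : nat) (A : 'M[R]_N)
  (betaa kappa : R) (p q : 'I_N -> R -> R) (i : 'I_N) (t : R) : R :=
  kappa * (1 - p i t - q i t) * pressure A p i t
  - betaa * q i t * pressure A p i t.

Definition sis_rhs (R : realType) (N : nat) (A : 'M[R]_N)
  (beta0 delta : R) (p : 'I_N -> R -> R) (i : 'I_N) (t : R) : R :=
  beta0 * (1 - p i t) * pressure A p i t - delta * p i t.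

(* Main.v *)
Require Import Defs.
From HB Require Import structures.
From mathcomp Require Import all_boot all_order all_algebra.
From mathcomp Require Import all_classical all_reals all_analysis.
From mathcomp Require Import lra.
Import Order.TTheory GRing.Theory Num.Theory.
Import numFieldNormedType.Exports.
Local Open Scope ring_scope.
Local Open Scope classical_set_scope.


Lemma der_cont (R : realType) (g : R -> R) (s d : R) :
  is_derive s 1 g d -> g x @[x --> s] --> g s.
Proof. by move=> [dg _]; apply/differentiable_continuous/derivable1_diffP. Qed.

Arguments der_cont {R g s d}.

Lemma near_all_fin {T : Type} (I : finType) (F : set_system T) (FF : Filter F)
  (P : I -> T -> Prop) :
  (forall i, \forall x \near F, P i x) -> \forall x \near F, forall i, P i x.
Proof.
move=> H.
have : forall s : seq I, \forall x \near F, forall i, i \in s -> P i x.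
  elim => [|a s IH]; first by near=> x.
  near=> x => i; rewrite in_cons => /orP[/eqP->|]; first by near: x; exact: H.
  by move: i; near: x; exact: IH.
move=> /(_ (enum I)); apply: filterS => x Hx i; apply: Hx; by rewrite mem_enum.
Unshelve. all: by end_near. Qed.

Lemma ball_R (R : realType) (a e x : R) : a - e < x < a + e -> ball a e x.
Proof. by move=> /andP[h1 h2]; rewrite /ball /= ltr_norml; apply/andP; split; lra. Qed.
Lemma deriv_pos_left (R : realType) (g : R -> R) (s d : R) :
  is_derive s 1 g d -> 0 < d ->
  exists2 e, 0 < e & forall x, s - e < x < s -> g x < g s.
Proof.
move=> [dg dval] d0.
have H : (fun h => h^-1 *: ((g \o shift s) (h *: 1) - g s)) @ 0^' --> d.
  by rewrite -dval; exact: dg.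
have HH : \forall h \near 0^', 0 < h^-1 *: ((g \o shift s) (h *: 1) - g s).
  exact: cvgr_gt H _ d0.
move: HH; rewrite near_withinE => /nbhs_ballP [e /= e0 He].
exists e => // x /andP[x1 x2].
have hx : ball (0:R) e (x - s).
  rewrite /ball /= sub0r normrN ltr_norml; apply/andP; split; lra.
have := He _ hx; rewrite subr_eq0 => /(_ (negbT (lt_eqF x2))).
rewrite [_%:A]mulr1 subrK /GRing.scale /=.
have xs : x - s < 0 by lra.
move=> q; rewrite -subr_lt0.
have -> : g x - g s = (x - s) * ((x - s)^-1 * (g x - g s)).
  by rewrite mulrA mulfV ?mul1r // lt_eqF.
by rewrite nmulr_rlt0.
Qed.

Arguments deriv_pos_left {R g s d}.

Lemma crossing (R : realType) (I : finType) (g dg : I -> R -> R) (t0 T : R) :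
  (forall j, 0 < g j t0) ->
  (forall j, g j x @[x --> t0^'+] --> g j t0) ->
  (forall j t, t0 < t -> is_derive t 1 (g j) (dg j t)) ->
  (forall j t, t0 < t -> t <= T -> g j t = 0 -> (forall k, 0 <= g k t) -> 0 < dg j t) ->
  forall j t, t0 <= t -> t <= T -> 0 < g j t.
Proof.
move=> g0 gc gd gcr j t t0t tT.
rewrite ltNge; apply/negP => gjt.
pose S := [set s | (t0 <= s /\ s <= T) /\ exists k, g k s <= 0].
have St : S t by split; [split | exists j].
have Slb : has_lbound S by exists t0 => y [[]].
have Sne : S !=set0 by exists t.
pose s := inf S.
have lbS : forall y, S y -> s <= y := fun y Sy => ge_inf Slb Sy.
have [del del0 Hdel] : exists2 del, 0 < del &
    forall k x, t0 < x < t0 + del -> 0 < g k x.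
  have : \forall x \near t0^'+, forall k, 0 < g k x.
    by apply: near_all_fin => k; exact: cvgr_gt (gc k) _ (g0 k).
  rewrite near_withinE => /nbhs_ballP [e /= e0 He]; exists e => // k x /andP[x1 x2].
  by apply: He => //; apply: ball_R; apply/andP; split; lra.
have st0 : t0 + del <= s.
  apply: lb_le_inf => // y [[y1 y2] [k gk]].
  rewrite leNgt; apply/negP => yl.
  have : 0 < g k y.
    move: y1; rewrite le_eqVlt => /orP[/eqP<-|y1]; first exact: g0.
    by apply: Hdel; apply/andP; split.
  lra.
have sT : s <= T := le_trans (lbS t St) tT.
have s_t0 : t0 < s by lra.
have gcs k : g k x @[x --> s] --> g k s := der_cont (gd k s s_t0).
have below : forall e, 0 < e -> exists x, [/\ t0 <= x, x <= T, s - e < x & x < s].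
  move=> e e0; pose m := Num.min e (s - t0).
  have m1 : m <= e by rewrite ge_min lexx.
  have m2 : m <= s - t0 by rewrite ge_min lexx orbT.
  have m0 : 0 < m by rewrite lt_min e0 /=; lra.
  exists (s - m / 2); split; lra.
have pos k : 0 <= g k s.
  rewrite leNgt; apply/negP => neg.
  have : \forall x \near s, g k x < 0 by exact: cvgr_lt (gcs k) _ neg.
  move=> /nbhs_ballP [e /= e0 He].
  have [x [x1 x2 x3 x4]] := below e e0.
  have Sx : S x.
    split; first by split.
    by exists k; apply/ltW/He/ball_R/andP; split; lra.
  have := lbS x Sx; lra.
have [k gks] : exists k, g k s <= 0.
  apply: contrapT => H.
  have allpos : forall k, 0 < g k s.
    by move=> k; rewrite ltNge; apply/negP => h; apply: H; exists k.
  have : \forall x \near s, forall k, 0 < g k x.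
    by apply: (@near_all_fin _ _ (nbhs s) _) => k; exact: cvgr_gt (gcs k) _ (allpos k).
  move=> /nbhs_ballP [e /= e0 He].
  have [y Sy ys] := inf_adherent e0 (conj Sne Slb).
  have sy := lbS y Sy.
  case: Sy => _ [k gk].
  have : 0 < g k y by apply: He; apply/ball_R/andP; split; rewrite -/s; lra.
  lra.
have gks0 : g k s = 0 by apply/le_anti; rewrite gks pos.
have dpos := gcr k s s_t0 sT gks0 pos.
have [e e0 He] := deriv_pos_left (gd k s s_t0) dpos.
have [x [x1 x2 x3 x4]] := below e e0.
have Sx : S x.
  split; first by split.
  by exists k; apply/ltW; rewrite -gks0; apply: He; apply/andP; split.
have := lbS x Sx; lra.
Qed.

Lemma wder (R : realType) (eps M t0 x : R) :
  is_derive x 1 (fun y => eps * expR (M * (y - t0))) (M * (eps * expR (M * (x - t0)))).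
Proof.
have h1 : is_derive x 1 (fun y => M * (y - t0)) M.
  have := is_deriveZ M (is_deriveB (is_derive_id x 1) (is_derive_cst t0 x 1)).
  by rewrite subr0 /GRing.scale /= mulr1.
have h2 := @is_derive1_comp R expR (fun y => M * (y - t0)) x _ _ (is_derive_expR _) h1.
have h3 := is_deriveZ eps h2.
apply: is_derive_eq h3 _.
rewrite /GRing.scale /=. lra.
Qed.

Lemma barrier (R : realType) (I : finType) (u du : I -> R -> R) (t0 L : R) :
  0 <= L ->
  (forall j, 0 <= u j t0) ->
  (forall j, u j x @[x --> t0^'+] --> u j t0) ->
  (forall j t, t0 < t -> is_derive t 1 (u j) (du j t)) ->
  (forall j t e, t0 < t -> 0 < e -> e <= 1 -> u j t = - e ->
     (forall k, - e <= u k t) -> - (L * e) <= du j t) ->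
  forall j t, t0 <= t -> 0 <= u j t.
Proof.
move=> L0 u0 uc ud ucr j t t0t.
rewrite leNgt; apply/negP => ujt.
pose M := L + 1.
pose E := expR (M * (t - t0)).
have E0 : 0 < E by apply: expR_gt0.
pose c := Num.min 1 (- u j t) / 2.
have c0 : 0 < c by rewrite divr_gt0 // lt_min ltr01 /=; lra.
have c1 : c <= 1 / 2 by rewrite ler_pM2r // ge_min lexx.
have c2 : c < - u j t.
  have : Num.min 1 (- u j t) <= - u j t by rewrite ge_min lexx orbT.
  rewrite /c; lra.
pose eps := c / E.
have eps0 : 0 < eps by rewrite divr_gt0.
pose w x := eps * expR (M * (x - t0)).
have wt : w t = c by rewrite /w /eps -/E divfK // gt_eqF.
have wpos x : 0 < w x by rewrite /w mulr_gt0 // expR_gt0.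
have wle x : x <= t -> w x <= c.
  move=> xt; rewrite -wt /w ler_pM2l // ler_expR ler_pM2l; last by rewrite /M; lra.
  lra.
have wd (x : R) : is_derive x (1 : R) w (M * w x) by apply: wder.
have wc : w x @[x --> t0^'+] --> w t0.
  by apply: cvg_at_right_filter; apply: der_cont (wd t0).
suff : 0 < u j t + w t by rewrite wt; lra.
apply: (@crossing R I (fun k x => u k x + w x) (fun k x => du k x + M * w x) t0 t) => //.
- move=> k; rewrite /w subrr mulr0 expR0 mulr1; have := u0 k; lra.
- by move=> k; apply: cvgD; [apply: uc | apply: wc].
- by move=> k x x0; exact: (is_deriveD (ud k x x0) (wd x)).
move=> k x x0 xt gk gall.
have wx1 : w x <= 1 by have := wle x xt; lra.
have ukx : u k x = - w x by lra.
have hall : forall k', - w x <= u k' x by move=> k'; have := gall k'; lra.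
have := ucr k x (w x) x0 (wpos x) wx1 ukx hall.
have := wpos x; rewrite /M; lra.
Qed.

Section Arith.
Variable R : realFieldType.
Local Set Implicit Arguments. Local Unset Strict Implicit.

Lemma prod_lb (K e x y : R) : 0 <= K -> 0 <= e -> e <= 1 -> -e <= x -> x <= 3 ->
  -(K*e) <= y -> y <= 3*K -> -(7*K*e) <= x*y.
Proof.
move=> K0 e0 e1 x1 x2 y1 y2.
have h1 : 0 <= (x + e) * (y + K * e) by apply: mulr_ge0; lra.
have h2 : 0 <= (3 - x) * (K * e) by apply: mulr_ge0; [lra| apply: mulr_ge0].
have h3 : 0 <= e * (3 * K - y) by apply: mulr_ge0; lra.
have h4 : 0 <= K * e * (1 - e) by apply: mulr_ge0; [apply: mulr_ge0|lra].
lra.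
Qed.

Lemma arith_p (b0 ba d K e p q S : R) : 0 <= b0 -> 0 <= ba -> 0 <= d -> 0 <= K ->
  0 <= e -> e <= 1 -> p = - e -> -e <= 1 - p - q -> 1 - p - q <= 3 -> -e <= q -> q <= 3 ->
  -(K*e) <= S -> S <= 3*K ->
  -((7*K*(b0+ba)) * e) <= b0 * (1 - p - q) * S + ba * q * S - d * p.
Proof.
move=> b00 ba0 d0 K0 e0 e1 pe s1 s2 q1 q2 S1 S2.
have h1 := ler_wpM2l b00 (prod_lb K0 e0 e1 s1 s2 S1 S2).
have h2 := ler_wpM2l ba0 (prod_lb K0 e0 e1 q1 q2 S1 S2).
have h3 : 0 <= d * e by apply: mulr_ge0.
rewrite pe; rewrite pe in h1; lra.
Qed.

Lemma arith_q (k ba K e p q S : R) : 0 <= k -> 0 <= ba -> 0 <= K ->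
  0 <= e -> e <= 1 -> q = - e -> -e <= 1 - p - q -> 1 - p - q <= 3 ->
  -(K*e) <= S -> S <= 3*K ->
  -((7*K*k + ba*K) * e) <= k * (1 - p - q) * S - ba * q * S.
Proof.
move=> k0 ba0 K0 e0 e1 qe s1 s2 S1 S2.
have h1 := ler_wpM2l k0 (prod_lb K0 e0 e1 s1 s2 S1 S2).
have h2 : 0 <= ba * e * (S + K * e) by apply: mulr_ge0; [apply: mulr_ge0|lra].
have h3 : 0 <= ba * K * e * (1 - e) by apply: mulr_ge0; [apply/mulr_ge0/e0; apply: mulr_ge0|lra].
rewrite qe; rewrite qe in h1; lra.
Qed.

Lemma arith_s (b0 ba k d K e p q S : R) : 0 <= b0 -> 0 <= k -> 0 <= d -> 0 <= K ->
  0 <= e -> e <= 1 -> 1 - p - q = - e -> -e <= p ->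
  -(K*e) <= S ->
  -(((b0 + k) * K + d) * e) <=
  - (b0 * (1 - p - q) * S + ba * q * S - d * p) - (k * (1 - p - q) * S - ba * q * S).
Proof.
move=> b00 k0 d0 K0 e0 e1 se p1 S1.
rewrite se.
have h2 : 0 <= (b0 + k) * e * (S + K * e) by apply: mulr_ge0; [apply: mulr_ge0|]; lra.
have h3 : 0 <= (b0 + k) * K * e * (1 - e) by apply: mulr_ge0; [apply/mulr_ge0/e0; apply: mulr_ge0|]; lra.
have h4 : 0 <= d * (p + e) by apply: mulr_ge0; lra.
lra.
Qed.

Lemma arith_p' (b0 d K e p S : R) : 0 <= b0 -> 0 <= d -> 0 <= K ->
  0 <= e -> e <= 1 -> p = - e -> -(K*e) <= S ->
  -((2*K*b0) * e) <= b0 * (1 - p) * S - d * p.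
Proof.
move=> b00 d0 K0 e0 e1 pe S1.
rewrite pe.
have h2 : 0 <= b0 * (1 + e) * (S + K * e) by apply: mulr_ge0; [apply: mulr_ge0|]; lra.
have h3 : 0 <= b0 * K * e * (1 - e) by apply: mulr_ge0; [apply/mulr_ge0/e0; apply: mulr_ge0|]; lra.
have h4 : 0 <= d * e by apply: mulr_ge0.
lra.
Qed.

Lemma arith_r (b0 d K e p S : R) : 0 <= b0 -> 0 <= d -> 0 <= K ->
  0 <= e -> e <= 1 -> 1 - p = - e -> -(K*e) <= S ->
  -((K*b0) * e) <= - (b0 * (1 - p) * S - d * p).
Proof.
move=> b00 d0 K0 e0 e1 pe S1.
have -> : p = 1 + e by lra.
have h2 : 0 <= b0 * e * (S + K * e) by apply: mulr_ge0; [apply: mulr_ge0|]; lra.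
have h3 : 0 <= b0 * K * e * (1 - e) by apply: mulr_ge0; [apply/mulr_ge0/e0; apply: mulr_ge0|]; lra.
have h4 : 0 <= d * (1 + e) by apply: mulr_ge0; lra.
lra.
Qed.

Lemma arith_d (b0 ba d K e p q p' S S' : R) : 0 <= b0 -> 0 <= ba -> ba <= b0 ->
  0 <= d -> 0 <= K -> 0 <= e ->
  p' - p = - e -> 0 <= S -> 0 <= q -> 0 <= p' -> p' <= 1 -> -(K*e) <= S' - S ->
  -((b0*K) * e) <= (b0 * (1 - p') * S' - d * p') - (b0 * (1 - p - q) * S + ba * q * S - d * p).
Proof.
move=> b00 ba0 bab d0 K0 e0 de S0 q0 p0 p1 D1.
have h1 : 0 <= b0 * (1 - p') * (S' - S + K * e) by apply: mulr_ge0; [apply: mulr_ge0|]; lra.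
have h2 : 0 <= b0 * p' * K * e by apply/mulr_ge0/e0; apply/mulr_ge0/K0; apply: mulr_ge0.
have h3 : 0 <= (b0 - ba) * q * S by apply: mulr_ge0; [apply: mulr_ge0|]; lra.
have h4 : 0 <= b0 * e * S by apply/mulr_ge0/S0; apply: mulr_ge0.
have h5 : 0 <= d * e by apply: mulr_ge0.
have -> : p = p' + e by lra.
lra.
Qed.

End Arith.

Lemma press_lb (R : realType) (N : nat) (A : 'M[R]_N) (i : 'I_N) (f : 'I_N -> R) (a : R) :
  (forall j, A i j = 0 \/ A i j = 1) -> (forall j, a <= f j) -> a <= 0 ->
  N%:R * a <= \sum_(j < N) A i j * f j.
Proof.
move=> HA Hf a0.
have -> : N%:R * a = \sum_(j < N) a by rewrite sumr_const card_ord mulr_natl.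
by apply: ler_sum => j _; case: (HA j) => ->; rewrite ?mul0r ?mul1r.
Qed.

Lemma press_ub (R : realType) (N : nat) (A : 'M[R]_N) (i : 'I_N) (f : 'I_N -> R) (b : R) :
  (forall j, A i j = 0 \/ A i j = 1) -> (forall j, f j <= b) -> 0 <= b ->
  \sum_(j < N) A i j * f j <= N%:R * b.
Proof.
move=> HA Hf b0.
have -> : N%:R * b = \sum_(j < N) b by rewrite sumr_const card_ord mulr_natl.
by apply: ler_sum => j _; case: (HA j) => ->; rewrite ?mul0r ?mul1r.
Qed.

Theorem theorem1 (R : realType) (N : nat) (A : 'M[R]_N)
    (beta0 betaa delta kappa t0 : R) (p q p' : 'I_N -> R -> R) :
  (forall i j, A i j = 0 \/ A i j = 1) ->
  (forall i, A i i = 0) ->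
  0 < beta0 -> 0 < delta -> 0 < kappa -> 0 <= betaa -> betaa < beta0 ->
  (forall i, 0 <= p i t0) -> (forall i, 0 <= q i t0) ->
  (forall i, p i t0 + q i t0 <= 1) ->
  (forall i, p' i t0 = p i t0) ->
  (* solutions are (right-)continuous at the initial time t0 *)
  (forall i, p i x @[x --> t0^'+] --> p i t0) ->
  (forall i, q i x @[x --> t0^'+] --> q i t0) ->
  (forall i, p' i x @[x --> t0^'+] --> p' i t0) ->
  (* the SAIS system holds on (t0, oo) *)
  (forall i t, t0 < t ->
     is_derive t 1 (p i) (sais_p_rhs A beta0 betaa delta p q i t)) ->
  (forall i t, t0 < t ->
     is_derive t 1 (q i) (sais_q_rhs A betaa kappa p q i t)) ->
  (* the SIS system holds on (t0, oo) *)
  (forall i t, t0 < t ->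
     is_derive t 1 (p' i) (sis_rhs A beta0 delta p' i t)) ->
  forall i t, t0 <= t -> p i t <= p' i t.

Proof.
move=> HA _ b0 d0 k0 ba0 bab p0 q0 pq0 pp0 pc qc p'c Hp Hq Hp' i t tt.
have b00 : 0 <= beta0 by lra.
have d00 : 0 <= delta by lra.
have k00 : 0 <= kappa by lra.
pose K : R := N%:R.
have K0 : 0 <= K by rewrite /K ler0n.
have Plb (f : 'I_N -> R) (a : R) j : (forall j, a <= f j) -> a <= 0 ->
    K * a <= \sum_(l < N) A j l * f l.
  by move=> ? ?; apply: press_lb.
have Pub (f : 'I_N -> R) (b : R) j : (forall j, f j <= b) -> 0 <= b ->
    \sum_(l < N) A j l * f l <= K * b.
  by move=> ? ?; apply: press_ub.
have hL (L Lc e : R) : 0 <= e -> Lc <= L -> -(L * e) <= -(Lc * e).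
  by move=> e0 LL; rewrite lerN2 ler_wpM2r.
pose u1 (k : ('I_N + 'I_N + 'I_N)%type) (x : R) : R :=
  match k with inl (inl j) => p j x | inl (inr j) => q j x | inr j => 1 - p j x - q j x end.
pose du1 (k : ('I_N + 'I_N + 'I_N)%type) (x : R) : R :=
  match k with
  | inl (inl j) => sais_p_rhs A beta0 betaa delta p q j x
  | inl (inr j) => sais_q_rhs A betaa kappa p q j x
  | inr j => - sais_p_rhs A beta0 betaa delta p q j x - sais_q_rhs A betaa kappa p q j x end.
pose Lp := 7*K*(beta0+betaa).
pose Lq := 7*K*kappa + betaa*K.
pose Ls := (beta0+kappa)*K + delta.
have Lp0 : 0 <= Lp by rewrite /Lp; apply: mulr_ge0; [apply: mulr_ge0|]; lra.
have Lq0 : 0 <= Lq by rewrite /Lq; apply: addr_ge0; apply: mulr_ge0 => //; apply: mulr_ge0 => //.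
have Ls0 : 0 <= Ls by rewrite /Ls; apply: addr_ge0 => //; apply: mulr_ge0 => //; lra.
have H1 : forall k x, t0 <= x -> 0 <= u1 k x.
  apply: (@barrier R _ u1 du1 t0 (Lp + Lq + Ls)).
  - lra.
  - case => [[j|j]|j] /=; [exact: p0 | exact: q0 | have := pq0 j; lra].
  - case => [[j|j]|j] /=; [exact: pc | exact: qc |].
    by apply: cvgB; [apply: cvgB; [exact: cvg_cst| exact: pc] | exact: qc].
  - case => [[j|j]|j] x xt /=; [exact: Hp | exact: Hq |].
    apply: is_derive_eq.
      exact: (is_deriveB (is_deriveB (is_derive_cst (1:R) x 1) (Hp j x xt)) (Hq j x xt)).
    by rewrite sub0r.
  move=> k x e xt e0 e1 uke hall.
  have hpj j : -e <= p j x := hall (inl (inl j)).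
  have hqj j : -e <= q j x := hall (inl (inr j)).
  have hsj j : -e <= 1 - p j x - q j x := hall (inr j).
  have hpu j : p j x <= 3 by have := hqj j; have := hsj j; lra.
  have S1 j : -(K * e) <= pressure A p j x.
    by rewrite -mulrN; apply: Plb => //; lra.
  have S2 j : pressure A p j x <= 3 * K.
    by rewrite mulrC; apply: Pub.
  case: k uke => [[j|j]|j] /= uke.
  + apply: le_trans (hL _ Lp e _ _) _; [lra|lra|].
    rewrite /sais_p_rhs; apply: arith_p => //; try lra.
    * by have := hqj j; have := hsj j; lra.
    * by have := hqj j; have := hsj j; lra.
  + apply: le_trans (hL _ Lq e _ _) _; [lra|lra|].
    rewrite /sais_q_rhs; apply: arith_q => //; try lra.
    by have := hpj j; have := hsj j; lra.
  + apply: le_trans (hL _ Ls e _ _) _; [lra|lra|].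
    rewrite /sais_p_rhs /sais_q_rhs; apply: arith_s => //; lra.
have hq x j : t0 <= x -> 0 <= q j x := fun h => H1 (inl (inr j)) x h.
have hp x j : t0 <= x -> 0 <= p j x := fun h => H1 (inl (inl j)) x h.
have hs x j : t0 <= x -> 0 <= 1 - p j x - q j x := fun h => H1 (inr j) x h.
pose u2 (k : ('I_N + 'I_N)%type) (x : R) : R :=
  match k with inl j => p' j x | inr j => 1 - p' j x end.
pose du2 (k : ('I_N + 'I_N)%type) (x : R) : R :=
  match k with inl j => sis_rhs A beta0 delta p' j x | inr j => - sis_rhs A beta0 delta p' j x end.
pose L2a := 2*K*beta0.
pose L2b := K*beta0.
have L2a0 : 0 <= L2a by rewrite /L2a; apply: mulr_ge0 => //; apply: mulr_ge0 => //.
have L2b0 : 0 <= L2b by rewrite /L2b; apply: mulr_ge0.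
have H2 : forall k x, t0 <= x -> 0 <= u2 k x.
  apply: (@barrier R _ u2 du2 t0 (L2a + L2b)).
  - lra.
  - case => j /=; rewrite pp0; [exact: p0 | have := pq0 j; have := q0 j; lra].
  - case => j /=; [exact: p'c |].
    by apply: cvgB; [exact: cvg_cst| exact: p'c].
  - case => j x xt /=; [exact: Hp' |].
    apply: is_derive_eq.
      exact: (is_deriveB (is_derive_cst (1:R) x 1) (Hp' j x xt)).
    by rewrite sub0r.
  move=> k x e xt e0 e1 uke hall.
  have hpj j : -e <= p' j x := hall (inl j).
  have hrj j : -e <= 1 - p' j x := hall (inr j).
  have S1 j : -(K * e) <= pressure A p' j x.
    by rewrite -mulrN; apply: Plb => //; lra.
  case: k uke => j /= uke.
  + apply: le_trans (hL _ L2a e _ _) _; [lra|lra|].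
    rewrite /sis_rhs; apply: arith_p' => //; lra.
  + apply: le_trans (hL _ L2b e _ _) _; [lra|lra|].
    rewrite /sis_rhs; apply: arith_r => //; lra.
have hp'0 x j : t0 <= x -> 0 <= p' j x := fun h => H2 (inl j) x h.
have hp'1 x j : t0 <= x -> 0 <= 1 - p' j x := fun h => H2 (inr j) x h.
pose u3 (j : 'I_N) (x : R) : R := p' j x - p j x.
pose du3 (j : 'I_N) (x : R) : R :=
  sis_rhs A beta0 delta p' j x - sais_p_rhs A beta0 betaa delta p q j x.
have H3 : forall k x, t0 <= x -> 0 <= u3 k x.
  apply: (@barrier R _ u3 du3 t0 (beta0 * K)).
  - exact: mulr_ge0.
  - by move=> j; rewrite /u3 pp0 subrr.
  - by move=> j; apply: cvgB; [exact: p'c | exact: pc].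
  - move=> j x xt; exact: (is_deriveB (Hp' j x xt) (Hp j x xt)).
  move=> j x e xt e0 e1 uje hall.
  have xt' : t0 <= x by lra.
  have D1 : -(K * e) <= pressure A p' j x - pressure A p j x.
    rewrite /pressure -sumrB.
    under eq_bigr => l _ do rewrite -mulrBr.
    by rewrite -mulrN; apply: Plb => //; lra.
  have S0 : 0 <= pressure A p j x.
    by rewrite -(mulr0 K); apply: Plb => // l; exact: hp.
  rewrite /du3 /sis_rhs /sais_p_rhs; apply: arith_d => //; try lra.
  - exact: hq.
  - exact: hp'0.
  - by have := hp'1 x j xt'; lra.
by have := H3 i t tt; rewrite /u3; lra.
Qed.
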